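(* Let $(N,A_1,A_2,\dots)$ be as in the context. Then $N_\delta(t)=N_\delta(ct)$ for all $t\in\mathbb{R}^d\setminus\{0\}$, $\delta\ge0$ and $c>0$. If moreover Conditions (C1) and (C7) hold, then there exist $\delta_0>0$ and $\eta>0$ such that $\mathbb{E}[N_\delta(t)]>1+\eta$ for all $t\in\mathbb{R}^d\setminus\{0\}$ and all $\delta\in[0,\delta_0]$.
   Context: Notation: $G$ is the set of $d\times d$ nonnegative matrices; $|x|=\sum_i|x_i|$; $\mathbb{S}^{d-1}=\{x\in\mathbb{R}^d:|x|=1\}$. Setting: random $A_i\in G$, $N=\#\{i:A_i\ne0\}<\infty$ a.s., $A_i\ne0$ iff $i\le N$. For $t\in\mathbb{R}^d$ and $\delta\ge0$: $N(t)=\#\{i\ge1:A_i^Tt\ne0\}$ and $N_\delta(t)=\#\{1\le i\le N:|A_i^Tt|>\delta|t|\}$. (C1) $N\ge1$ a.s., $\mathbb{E}[N]\in(1,\infty)$, $A_i\in G$, $A_i\ne0$ iff $i\le N$. (C7) A.s. $N(t)\ge1$ for all $t\ne0$, and $\mathbb{P}[N(t)=1]<1$ for each $t\ne0$; there exist $\varepsilon_0>0$ and for each $t\in\mathbb{S}^{d-1}$ an index $i(t)\in\mathbb{N}^*$ with $A_{i(t)}^Tt\ne0$ such that $\sup_{t\in\mathbb{S}^{d-1}}\mathbb{E}[|A_{i(t)}^Tt|^{-\varepsilon_0}]<\infty$. *)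

(* Defs.v *)
From HB Require Import structures.
From mathcomp Require Import all_boot all_order all_algebra.
From mathcomp Require Import all_classical all_reals all_analysis.
Set Implicit Arguments. Unset Strict Implicit. Unset Printing Implicit Defensive.
Import Order.TTheory GRing.Theory Num.Theory.
Local Open Scope ring_scope.

Definition l1norm (R : realType) (d : nat) (x : 'cV[R]_d) : R :=
  \sum_(i < d) `|x i ord0|.

Definition Ndelta (T : Type) (R : realType) (d : nat)
  (A : nat -> T -> 'M[R]_d) (N : T -> nat) (delta : R) (t : 'cV[R]_d) (w : T) : nat :=
  count (fun i => delta * l1norm t < l1norm ((A i w)^T *m t)) (iota 1 (N w)).

(* N(t)(w) = #{i >= 1 : A_i(w)^T t <> 0}; since A_i = 0 for i > N(w), the
   count is over 1 <= i <= N(w). *)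
Definition Nt (T : Type) (R : realType) (d : nat)
  (A : nat -> T -> 'M[R]_d) (N : T -> nat) (t : 'cV[R]_d) (w : T) : nat :=
  count (fun i => (A i w)^T *m t != 0) (iota 1 (N w)).

(* |x|^{-eps} as an extended real, with the convention |0|^{-eps} = +oo *)
Definition negpow (R : realType) (d : nat) (eps : R) (x : 'cV[R]_d) : \bar R :=
  if x == 0 then +oo%E else ((l1norm x) `^ (- eps))%:E.

(* Main.v *)
Require Import Defs.
From HB Require Import structures.
From mathcomp Require Import all_boot all_order all_algebra.
From mathcomp Require Import all_classical all_reals all_analysis.
From mathcomp Require Import measurable_realfun.
From mathcomp Require Import ring lra.
Import Order.TTheory GRing.Theory Num.Theory.
Import numFieldNormedType.Exports.
Local Open Scope ring_scope.
Local Open Scope classical_set_scope.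
Module Helpers.
Set Implicit Arguments. Unset Strict Implicit.


Section l1.
Variables (R : realType) (d : nat).
Implicit Types x y : 'cV[R]_d.

Lemma l1norm_ge0 x : 0 <= l1norm x.
Proof. by apply: sumr_ge0 => i _. Qed.

Lemma l1normZ (c : R) x : l1norm (c *: x) = `|c| * l1norm x.
Proof. by rewrite /l1norm mulr_sumr; apply: eq_bigr => i _; rewrite mxE normrM. Qed.

Lemma l1normN x : l1norm (- x) = l1norm x.
Proof. by rewrite /l1norm; apply: eq_bigr => i _; rewrite mxE normrN. Qed.

Lemma l1normD x y : l1norm (x + y) <= l1norm x + l1norm y.
Proof.
rewrite /l1norm -big_split /=; apply: ler_sum => i _; rewrite mxE; exact: ler_normD.
Qed.

Lemma l1norm_coord x i : `|x i ord0| <= l1norm x.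
Proof.
rewrite /l1norm (bigD1 i) //= lerDl; by apply: sumr_ge0.
Qed.

Lemma l1norm_eq0 x : (l1norm x == 0) = (x == 0).
Proof.
apply/idP/idP; last by move/eqP->; rewrite /l1norm big1 // => i _; rewrite mxE normr0.
move=> /eqP h; apply/eqP/matrixP => i j; rewrite (ord1 j) mxE.
apply/eqP; rewrite -normr_eq0 eq_le normr_ge0 andbT -h; exact: l1norm_coord.
Qed.

Lemma l1norm_gt0 x : x != 0 -> 0 < l1norm x.
Proof. by move=> hx; rewrite lt_def l1norm_eq0 hx l1norm_ge0. Qed.

Definition msum (M : 'M[R]_d) : R := \sum_(j < d) \sum_(k < d) M j k.

Lemma l1norm_mul (M : 'M[R]_d) x : (forall j k, 0 <= M j k) ->
  l1norm (M^T *m x) <= msum M * l1norm x.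
Proof.
move=> hM; rewrite /l1norm /msum.
rewrite (exchange_big) /= mulr_suml; apply: ler_sum => k _.
rewrite mxE mulr_suml; apply: le_trans (ler_norm_sum _ _ _) _.
apply: ler_sum => j _; rewrite mxE normrM ger0_norm //.
by apply: ler_wpM2l => //; exact: l1norm_coord.
Qed.

Lemma msum_ge0 (M : 'M[R]_d) : (forall j k, 0 <= M j k) -> 0 <= msum M.
Proof. by move=> hM; apply: sumr_ge0 => j _; apply: sumr_ge0. Qed.

End l1.



Section meas.
Context dT (T : measurableType dT) (R : realType).

Lemma meas_map (p : nat -> T -> bool) (s : seq nat) (Q : seq bool -> bool) :
  (forall i, measurable [set w | p i w]) ->
  measurable [set w | Q [seq p i w | i <- s]].
Proof.
move=> hp; elim: s Q => [|x s IH] Q /=.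
  case: (Q [::]).
    by rewrite (_ : [set _ : T | true] = setT); [exact: measurableT | apply/seteqP].
  by rewrite (_ : [set _ : T | false] = set0); [exact: measurable0 | apply/seteqP; split => w].
rewrite (_ : [set w | _] = ([set w | p x w] `&` [set w | (fun l => Q (true :: l)) [seq p i w | i <- s]])
   `|` (~` [set w | p x w] `&` [set w | (fun l => Q (false :: l)) [seq p i w | i <- s]])).
  apply: measurableU; apply: measurableI.
  - exact: hp.
  - exact: (IH (fun l => Q (true :: l))).
  - exact: measurableC.
  - exact: (IH (fun l => Q (false :: l))).
apply/seteqP; split => w /=.
  by case: (p x w) => h; [left | right].
by case: (p x w) => -[] [].
Qed.

Lemma meas_mapN (p : nat -> T -> bool) (N : T -> nat) (Q : seq bool -> bool) :
  (forall n, measurable [set w | N w = n]) ->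
  (forall i, measurable [set w | p i w]) ->
  measurable [set w | Q [seq p i w | i <- iota 1 (N w)]].
Proof.
move=> hN hp.
rewrite (_ : [set w | _] = \bigcup_n ([set w | N w = n] `&` [set w | Q [seq p i w | i <- iota 1 n]])).
  by apply: bigcupT_measurable => n; apply: measurableI => //; exact: meas_map.
apply/seteqP; split => w /=.
  by move=> h; exists (N w) => //.
by move=> [n _ [/= -> h]].
Qed.

Lemma meas_natfun (n : T -> nat) : (forall m, measurable [set w | n w = m]) ->
  measurable_fun setT (fun w => ((n w)%:R : R)%:E).
Proof.
move=> hn _ B mB; rewrite setTI.
rewrite (_ : _ @^-1` B = \bigcup_m (if pselect (B ((m%:R : R)%:E)) then [set w | n w = m] else set0)).
  apply: bigcupT_measurable => m; case: pselect => hm; [exact: hn | exact: measurable0].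
apply/seteqP; split => w /=.
  by move=> h; exists (n w) => //; case: pselect.
by move=> [m _]; case: pselect => // h /= hm; rewrite hm.
Qed.

Lemma meas_bool (b : T -> bool) : measurable_fun setT b -> measurable [set w | b w].
Proof.
move=> hb; have := hb measurableT [set true] I.
by rewrite setTI (_ : _ @^-1` _ = [set w | b w]) //; apply/seteqP; split => w /=.
Qed.

End meas.



Section prob.
Context dT (T : measurableType dT) (R : realType) (P : probability T R).

Definition pr (X : set T) : R := fine (P X).

Lemma prE X : measurable X -> P X = (pr X)%:E.
Proof.
move=> mX; rewrite /pr fineK // ge0_fin_numE ?measure_ge0 //.
by apply: (le_lt_trans (probability_le1 P mX)); rewrite ltry.
Qed.

Lemma pr_ge0 X : measurable X -> 0 <= pr X.
Proof. by move=> mX; rewrite -lee_fin -prE ?measure_ge0. Qed.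

Lemma pr_le1 X : measurable X -> pr X <= 1.
Proof. by move=> mX; rewrite -lee_fin -prE ?probability_le1. Qed.

Lemma prC X : measurable X -> pr (~` X) = 1 - pr X.
Proof.
move=> mX; apply/eqP; rewrite -(@eqe R) -prE; last exact: measurableC.
by rewrite probability_setC // prE.
Qed.

Lemma prU X Y : measurable X -> measurable Y ->
  pr (X `|` Y) = pr X + pr Y - pr (X `&` Y).
Proof.
move=> mX mY; apply/eqP; rewrite -(@eqe R) -prE; last exact: measurableU.
have hX : (P X < +oo)%E by rewrite prE // ltry.
rewrite measureUfinl //; apply/eqP.
by rewrite EFinB EFinD -(prE mX) -(prE mY) -(prE (measurableI _ _ mX mY)).
Qed.

Lemma pr_le X Y : measurable X -> measurable Y -> X `<=` Y -> pr X <= pr Y.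
Proof. by move=> mX mY XY; rewrite -lee_fin -!prE // le_measure // inE. Qed.

Lemma prI_ge X Y : measurable X -> measurable Y -> pr X + pr Y - 1 <= pr (X `&` Y).
Proof.
move=> mX mY; have := prU mX mY; have := pr_le1 (measurableU _ _ mX mY). lra.
Qed.

Lemma prU_le X Y : measurable X -> measurable Y -> pr (X `|` Y) <= pr X + pr Y.
Proof.
move=> mX mY; rewrite prU //; have := pr_ge0 (measurableI _ _ mX mY); lra.
Qed.

End prob.



Section mainsec.
Context dT (T : measurableType dT) (R : realType) (P : probability T R) (d : nat)
  (A : nat -> T -> 'M[R]_d) (N : T -> nat).
Hypothesis hAmeas : forall i (j k : 'I_d), measurable_fun setT (fun w => A i w j k).
Hypothesis hNmeas : forall n : nat, measurable [set w | N w = n].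
Hypothesis hG : forall i w (j k : 'I_d), 0 <= A i w j k.

Definition fl i (t : 'cV[R]_d) w := l1norm ((A i w)^T *m t).

Lemma fl_meas i t : measurable_fun setT (fl i t).
Proof.
rewrite (_ : fl i t = fun w => \sum_(k < d) `|\sum_(j < d) A i w j k * t j ord0|).
  apply: measurable_sum => k; apply: measurableT_comp => //.
  apply: measurable_sum => j; apply: measurable_funM => //; exact: measurable_cst.
apply/funext => w; rewrite /fl /l1norm; apply: eq_bigr => k _.
by rewrite mxE; congr `|_|; apply: eq_bigr => j _; rewrite mxE.
Qed.

Lemma msA_meas i : measurable_fun setT (fun w => msum (A i w)).
Proof.
rewrite /msum; apply: measurable_sum => j; apply: measurable_sum => k; exact: hAmeas.
Qed.

Lemma fl_ne0 i t w : ((A i w)^T *m t != 0) = (0 < fl i t w).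
Proof. by rewrite /fl lt_def l1norm_eq0 l1norm_ge0 andbT. Qed.

Lemma Nt_level (t : 'cV[R]_d) (Q : nat -> bool) : measurable [set w | Q (Nt A N t w)].
Proof.
rewrite (_ : [set w | _] = [set w | (fun l => Q (count id l)) [seq 0 < fl i t w | i <- iota 1 (N w)]]).
  apply: (@meas_mapN _ _ (fun i w => 0 < fl i t w) N (fun l => Q (count id l))) => // i.
  apply: meas_bool.
  apply: measurable_fun_ltr; [exact: measurable_cst | exact: fl_meas].
have E w : count (fun i => (A i w)^T *m t != 0) (iota 1 (N w)) =
    count (fun i => 0 < fl i t w) (iota 1 (N w)).
  by apply: eq_count => i; exact: fl_ne0.
by apply/seteqP; split => w /=; rewrite /Nt count_map E.
Qed.

Lemma Nd_level e (t : 'cV[R]_d) (Q : nat -> bool) : measurable [set w | Q (Ndelta A N e t w)].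
Proof.
rewrite (_ : [set w | _] = [set w | (fun l => Q (count id l)) [seq e * l1norm t < fl i t w | i <- iota 1 (N w)]]).
  apply: (@meas_mapN _ _ (fun i w => e * l1norm t < fl i t w) N (fun l => Q (count id l))) => // i.
  apply: meas_bool.
  apply: measurable_fun_ltr; [exact: measurable_cst | exact: fl_meas].
by apply/seteqP; split => w /=; rewrite /Ndelta count_map.
Qed.

Lemma Nd_meas e t : measurable_fun setT (fun w => ((Ndelta A N e t w)%:R : R)%:E).
Proof.
apply: meas_natfun => m; have := Nd_level e t (fun n => n == m).
by rewrite (_ : [set w | _] = [set w | Ndelta A N e t w = m]) //; apply/seteqP; split => w /= /eqP.
Qed.


Lemma in_setb (b : T -> bool) w : (w \in [set x | b x]) = b w.
Proof. by apply/idP/idP => [/set_mem|/mem_set]. Qed.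

Lemma count_le_in (a b : pred nat) (s : seq nat) :
  (forall i, i \in s -> a i -> b i) -> (count a s <= count b s)%N.
Proof.
elim: s => [//|x s IH] h /=; apply: leq_add; last first.
  by apply: IH => i hi; apply: h; rewrite inE hi orbT.
by case: (a x) (h x (mem_head _ _)) => // /(_ isT) ->.
Qed.

Lemma ex_big (s : seq nat) (Pk : nat -> nat -> Prop) :
  (forall i k k', (k <= k')%N -> Pk k i -> Pk k' i) -> (forall i, exists k, Pk k i) ->
  exists k, forall i, i \in s -> Pk k i.
Proof.
move=> mono ex; elim: s => [|x s [ks hs]]; first by exists 0%N.
have [kx hx] := ex x; exists (maxn kx ks) => i; rewrite inE => /orP[/eqP ->|hi].
  by apply: mono hx; exact: leq_maxl.
by apply: mono (hs i hi); exact: leq_maxr.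
Qed.

Definition Ek (t : 'cV[R]_d) (k : nat) := [set w | (fun l => (size l <= k)%N && all id l)
  [seq ((fl i t w == 0) || ((k.+1%:R)^-1 < fl i t w)) && (msum (A i w) <= k%:R) | i <- iota 1 (N w)]].

Lemma Ek_meas t k : measurable (Ek t k).
Proof.
apply: (@meas_mapN _ _ (fun i w => ((fl i t w == 0) || ((k.+1%:R)^-1 < fl i t w)) && (msum (A i w) <= k%:R)) N
   (fun l => (size l <= k)%N && all id l)) => // i.
apply: meas_bool; apply: measurable_and; first apply: measurable_or.
- apply: measurable_fun_eqr; [exact: fl_meas | exact: measurable_cst].
- apply: measurable_fun_ltr; [exact: measurable_cst | exact: fl_meas].
- apply: measurable_fun_ler; [exact: msA_meas | exact: measurable_cst].
Qed.

Lemma Ek_mono t k k' : (k <= k')%N -> Ek t k `<=` Ek t k'.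
Proof.
move=> kk' w /= /andP[hs ha]; apply/andP; split.
  by move: hs; rewrite !size_map size_iota => hs; exact: leq_trans hs kk'.
move: ha; rewrite !all_map => /allP ha; apply/allP => i hi /=.
move: (ha i hi) => /= /andP[h1 h2]; apply/andP; split.
  move: h1 => /orP[->//|h1]; apply/orP; right; apply: le_lt_trans h1.
  by rewrite lef_pV2 ?posrE ?ltr0n // ler_nat.
by apply: (le_trans h2); rewrite ler_nat.
Qed.

Lemma Ek_cover t : \bigcup_k Ek t k = setT.
Proof.
apply/seteqP; split => // w _.
have [k hk] : exists k, forall i, i \in iota 1 (N w) -> ((fl i t w == 0) || ((k.+1%:R)^-1 < fl i t w)) && (msum (A i w) <= k%:R).
  apply: (@ex_big (iota 1 (N w)) (fun k i => ((fl i t w == 0) || ((k.+1%:R)^-1 < fl i t w)) && (msum (A i w) <= k%:R))).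
- move=> i k k' kk' /andP[h1 h2]; apply/andP; split.
    move: h1 => /orP[->//|h1]; apply/orP; right; apply: le_lt_trans h1.
    by rewrite lef_pV2 ?posrE ?ltr0n // ler_nat.
  by apply: (le_trans h2); rewrite ler_nat.
- move=> i; have [k1 hk1] : exists k1, (fl i t w == 0) || ((k1.+1%:R)^-1 < fl i t w).
    have [/eqP h0|hn] := boolP (fl i t w == 0); first by exists 0%N; apply/orP; left; apply/eqP.
    have hp : 0 < fl i t w by rewrite lt_def hn /fl l1norm_ge0.
    exists (Num.truncn (fl i t w)^-1); apply/orP; right.
    by rewrite invf_plt ?posrE ?ltr0n // truncnS_gt.
  exists (maxn k1 (Num.truncn (msum (A i w))).+1); apply/andP; split.
    move: hk1 => /orP[->//|h1]; apply/orP; right; apply: le_lt_trans h1.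
    by rewrite lef_pV2 ?posrE ?ltr0n // ler_nat ltnS leq_maxl.
  by apply: (le_trans (ltW (truncnS_gt _))); rewrite ler_nat leq_maxr.
exists (maxn k (N w)) => //=; apply/andP; split.
  by rewrite size_map size_iota leq_maxr.
rewrite all_map; apply/allP => i hi /=.
have := hk i hi => /andP[h1 h2]; apply/andP; split.
  move: h1 => /orP[->//|h1]; apply/orP; right; apply: le_lt_trans h1.
  by rewrite lef_pV2 ?posrE ?ltr0n // ler_nat ltnS leq_maxl.
by apply: (le_trans h2); rewrite ler_nat leq_maxl.
Qed.


Lemma key (t t' : 'cV[R]_d) e k w :
  l1norm t = 1 -> l1norm (t' - t) <= (k.+1%:R)^-1 / (k%:R + 2) -> 0 <= e ->
  e <= (k.+1%:R)^-1 / (k%:R + 2) -> Ek t k w -> (Nt A N t w <= Ndelta A N e t' w)%N.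
Proof.
set m := (k.+1%:R)^-1; set rho := m / (k%:R + 2).
move=> t1 ht' e0 erho /andP[_ ha]; rewrite /Nt /Ndelta; apply: count_le_in => i hi hne.
move: ha; rewrite all_map => /allP /(_ i hi) /andP[h1 h2].
have hpos : 0 < fl i t w by rewrite -fl_ne0.
have hm : m < fl i t w by move: h1; rewrite gt_eqF.
have k2 : 0 < k%:R + 2 :> R by rewrite ltr_wpDl.
have m0 : 0 < m by rewrite invr_gt0 ltr0n.
have m1 : m <= 1 by rewrite invf_le1 ?ltr0n // ler1n.
have rho0 : 0 < rho by rewrite divr_gt0.
have f5 : rho * (k%:R + 2) = m by rewrite divfK // gt_eqF.
have f1 : fl i t w <= fl i t' w + msum (A i w) * l1norm (t' - t).
  have -> : fl i t w = l1norm ((A i w)^T *m t' + (A i w)^T *m (t - t')).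
    by rewrite /fl -mulmxDr addrC subrK.
  apply: (le_trans (l1normD _ _)); rewrite lerD2l -opprB mulmxN l1normN.
  exact: l1norm_mul.
have f2 : msum (A i w) * l1norm (t' - t) <= k%:R * rho.
  by apply: ler_pM => //; [exact: msum_ge0 | exact: l1norm_ge0].
have f3 : l1norm t' <= 1 + rho.
  rewrite -t1; have -> : t' = t + (t' - t) by rewrite addrC subrK.
  by apply: (le_trans (l1normD _ _)); rewrite lerD2l.
have f4 : e * l1norm t' <= rho * (1 + rho).
  by apply: ler_pM => //; exact: l1norm_ge0.
have rho1 : rho <= 1.
  have : rho * 1 <= rho * (k%:R + 2) by rewrite ler_pM2l //; have := ler0n R k; lra.
  rewrite f5 mulr1 => h; exact: le_trans h m1.
have f6 : rho * rho <= rho by rewrite ler_piMr // ltW.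
have f5' : m = k%:R * rho + 2 * rho by rewrite -f5; ring.
have f4' : e * l1norm t' <= rho + rho * rho by move: f4; rewrite mulrDr mulr1.
change (e * l1norm t' < fl i t' w); lra.
Qed.


Lemma local (t : 'cV[R]_d) : l1norm t = 1 ->
  {ae P, forall w, (1 <= Nt A N t w)%N} ->
  (P [set w | Nt A N t w = 1%N] < 1)%E ->
  exists rho eta : R, 0 < rho /\ 0 < eta /\
    forall (t' : 'cV[R]_d) (e : R), l1norm (t' - t) <= rho -> 0 <= e -> e <= rho ->
      ((1 + eta)%:E < \int[P]_w ((Ndelta A N e t' w)%:R : R)%:E)%E.
Proof.
move=> t1 hae h1.
pose H := [set w | (1 <= Nt A N t w)%N]; pose G := [set w | (2 <= Nt A N t w)%N].
have mH : measurable H by exact: (Nt_level t (fun n => 1 <= n)%N).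
have mG : measurable G by exact: (Nt_level t (fun n => 2 <= n)%N).
have m1 : measurable [set w | Nt A N t w = 1%N].
  have := Nt_level t (fun n => n == 1)%N.
  by rewrite (_ : [set w | _] = [set w | Nt A N t w = 1%N]) //; apply/seteqP; split => w /= /eqP.
have prH : pr P H = 1.
  case: hae => Z [mZ PZ sZ].
  have h := pr_le P (measurableC mH) mZ sZ.
  have : pr P Z = 0 by rewrite /pr PZ.
  move: h; have := pr_ge0 P (measurableC mH); rewrite prC //; lra.
have pG : 0 < pr P G.
  have sub : ~` G `<=` [set w | Nt A N t w = 1%N] `|` ~` H.
    move=> w /= hw; case E: (Nt A N t w) => [|[|n]].
    - by right; rewrite /H /= E.
    - by left.
    - by exfalso; apply: hw; rewrite /G /= E.
  have := pr_le P (measurableC mG) (measurableU _ _ m1 (measurableC mH)) sub.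
  have := prU_le P m1 (measurableC mH).
  rewrite prC // prC // prH.
  have : pr P [set w | Nt A N t w = 1%N] < 1 by rewrite -lte_fin -prE.
  lra.
have [p pE] : exists p, pr P G = p by exists (pr P G).
rewrite pE in pG.
have cv : (fun k => pr P (Ek t k)) @ \oo --> (1 : R).
  have := @nondecreasing_cvg_mu _ _ _ P (Ek t) (Ek_meas t).
  rewrite Ek_cover => /(_ measurableT) /(_ (fun n m nm => introT (subsetPset _ _) (Ek_mono nm))).
  set L := (X in _ --> X); have -> : L = 1%E by exact: probability_setT.
  by move=> /fine_cvgP [_].
have [k hk] : exists k, 1 - p / 4 < pr P (Ek t k).
  have hp : 1 - p / 4 < 1 by lra.
  have [K _ hK] := cvgr_gt _ cv _ hp; exists K; exact: (hK K (leqnn K)).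
pose E := Ek t k.
have mE : measurable E := Ek_meas t k.
have mEH := measurableI _ _ mE mH; have mEG := measurableI _ _ mE mG.
exists ((k.+1%:R)^-1 / (k%:R + 2)), (p / 2); split.
  by rewrite divr_gt0 // ?invr_gt0 ?ltr0n // ltr_wpDl.
split; first by lra.
move=> t' e ht' e0 erho.
have le1 : (\int[P]_w ((\1_(E `&` H) w : R)%:E + (\1_(E `&` G) w : R)%:E) <=
            \int[P]_w ((Ndelta A N e t' w)%:R : R)%:E)%E.
  apply: ge0_le_integral => //.
  - by move=> w _; rewrite !indicE adde_ge0 // lee_fin ler0n.
  - by apply: emeasurable_funD; apply/measurable_EFinP; exact: measurable_indic.
  - exact: Nd_meas.
  move=> w _; rewrite -EFinD lee_fin !indicE !in_setI.
  case hw: (w \in E); last by rewrite /= addr0 ler0n.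
  have hk' := key t1 ht' e0 erho (set_mem hw).
  rewrite /= /H /G !in_setb -natrD ler_nat; apply: leq_trans hk'.
  by case: (Nt A N t w) => [|[|n]].
have eq1 : (\int[P]_w ((\1_(E `&` H) w : R)%:E + (\1_(E `&` G) w : R)%:E) =
            P (E `&` H) + P (E `&` G))%E.
  rewrite ge0_integralD //; try (by move=> w _; rewrite indicE lee_fin ler0n);
    try (by apply/measurable_EFinP; exact: measurable_indic).
  by rewrite !integral_indic // !setIT.
apply: (lt_le_trans _ le1); rewrite eq1 (prE P mEH) (prE P mEG) -EFinD lte_fin.
have := prI_ge P mE mH; have := prI_ge P mE mG; rewrite prH pE.
lra.
Qed.

End mainsec.



Lemma near_coord (R : realType) d (x : 'rV[R]_d) (e : R) : 0 < e ->
  \forall y \near x, forall j, `|x ord0 j - (y : 'rV[R]_d) ord0 j| < e.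
Proof.
move=> e0; have := @near_ball _ _ x e e0; apply: filterS => y h j; rewrite /ball /= in h; case: h => _ /(_ ord0 j).
by rewrite -ball_normE.
Qed.

Lemma l1_near (R : realType) d (x v : 'rV[R]_d) (eps : R) :
  (forall j, `|x ord0 j - v ord0 j| < eps) -> l1norm (v^T - x^T) <= d%:R * eps.
Proof.
move=> h; rewrite /l1norm.
apply: (le_trans (y := \sum_(j < d) eps)); last by rewrite sumr_const card_ord mulr_natl.
apply: ler_sum => j _; rewrite !mxE distrC; exact: ltW.
Qed.

Lemma compact_sphere (R : realType) d (Phi : R -> 'cV[R]_d -> Prop) :
  (forall t, l1norm t = 1 -> exists rho, 0 < rho /\
     forall t' e, l1norm (t' - t) <= rho -> 0 < e -> e <= rho -> Phi e t') ->
  exists e, 0 < e /\ forall t, l1norm t = 1 -> Phi e t.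
Proof.
move=> hyp.
pose K := [set v : 'rV[R]_d | forall i, `[-1, 1]%classic (v ord0 i)].
have cK : compact K.
  exact: (@rV_compact R d (fun=> `[-1, 1]%classic) (fun=> @segment_compact R (-1) 1)).
have hc : \forall e \near (0:R)^'+, K `<=` (fun v => l1norm v^T = 1 -> Phi e v^T).
  apply: ((compact_near_coveringP K).1 cK R ((0:R)^'+)
   (fun e v => l1norm v^T = 1 -> Phi e v^T)) => x Kx; have d1 : 0 < d%:R + 1 :> R by rewrite ltr_wpDl.
  have [hx|hx] := eqVneq (l1norm x^T) 1.
  - have [rho [rho0 Hr]] := hyp _ hx.
    have re : 0 < rho / (d%:R + 1) by rewrite divr_gt0.
    near=> v e.
    have e0 : 0 < e by near: e; exact: nbhs_right_gt.
    have er : e <= rho by near: e; exact: nbhs_right_ltW.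
    have : forall j, `|x ord0 j - v ord0 j| < rho / (d%:R + 1).
      by near: v; exact: near_coord.
    move=> /l1_near h hv; apply: Hr => //; apply: (le_trans h).
    rewrite mulrCA ger_pMr // ler_pdivrMr // mul1r lerDl //.
  - pose eps := `|l1norm x^T - 1| / (d%:R + 1).
    have eps0 : 0 < eps by rewrite divr_gt0 // normr_gt0 subr_eq0.
    near=> v e => hv; exfalso.
    have : l1norm v^T != 1; last by rewrite hv eqxx.
    have : forall j, `|x ord0 j - v ord0 j| < eps by near: v; exact: near_coord.
    move=> /l1_near h.
    have h1 : l1norm v^T <= l1norm x^T + l1norm (v^T - x^T).
      by rewrite -[v^T in X in X <= _](subrK x^T) addrC; exact: l1normD.
    have h2 : l1norm x^T <= l1norm v^T + l1norm (v^T - x^T).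
      have eN : l1norm (v^T - x^T) = l1norm (x^T - v^T) by rewrite -l1normN opprB.
      by rewrite eN addrC -{1}(subrK v^T x^T); exact: l1normD.
    have h3 : d%:R * eps < `|l1norm x^T - 1|.
      rewrite /eps mulrCA gtr_pMr ?normr_gt0 ?subr_eq0 // ltr_pdivrMr // mul1r ltrDl //.
    apply/negP => /eqP h4; rewrite h4 in h1 h2; move: h3.
    rewrite ltr_normr => /orP[]; lra.
have PF : ProperFilter (nbhs (0:R)^'+) by exact: at_right_proper_filter.
have [e [he e0]] := filter_ex (filterI hc (nbhs_right_gt 0)).
exists e; split => // t t1; rewrite -[t]trmxK; apply: he; last by rewrite trmxK.
move=> i; rewrite /= in_itv /= mxE -ler_norml; have := l1norm_coord t i; rewrite t1 //.
Unshelve. all: by end_near.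
Qed.

End Helpers.
Import Helpers.

Theorem lemma4p1 (dT : measure_display) (T : measurableType dT) (R : realType)
  (P : probability T R) (d : nat)
  (A : nat -> T -> 'M[R]_d) (N : T -> nat)
  (* A_i are random matrices in G (nonnegative entries) *)
  (hAmeas : forall i (j k : 'I_d), measurable_fun setT (fun w => A i w j k))
  (hNmeas : forall n : nat, measurable [set w | N w = n])
  (hG : forall i w (j k : 'I_d), 0 <= A i w j k)
  (* A_i <> 0 iff i <= N, for i >= 1 *)
  (hsupp : forall w i, (1 <= i)%N -> (A i w != 0) = (i <= N w)%N) :
  (forall (t : 'cV[R]_d) (delta c : R) (w : T),
      t != 0 -> 0 <= delta -> 0 < c ->
      Ndelta A N delta t w = Ndelta A N delta (c *: t) w)
  /\
  ( (* (C1) *)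
    ({ae P, forall w, (1 <= N w)%N} /\
     (1 < \int[P]_w ((N w)%:R : R)%:E)%E /\
     (\int[P]_w ((N w)%:R : R)%:E < +oo)%E) ->
    (* (C7) *)
    ({ae P, forall w, forall t : 'cV[R]_d, t != 0 -> (1 <= Nt A N t w)%N} /\
     (forall t : 'cV[R]_d, t != 0 -> (P [set w | Nt A N t w = 1%N] < 1)%E) /\
     (exists eps0 : R, 0 < eps0 /\
      exists it : 'cV[R]_d -> nat, exists M : R,
        forall t : 'cV[R]_d, l1norm t = 1 ->
          (1 <= it t)%N /\
          {ae P, forall w, (A (it t) w)^T *m t != 0} /\
          (\int[P]_w negpow eps0 ((A (it t) w)^T *m t) <= M%:E)%E)) ->
    exists delta0 eta : R, 0 < delta0 /\ 0 < eta /\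
      forall (t : 'cV[R]_d) (delta : R), t != 0 -> 0 <= delta -> delta <= delta0 ->
        ((1 + eta)%:E < \int[P]_w ((Ndelta A N delta t w)%:R : R)%:E)%E).
Proof.
have part1 : forall (t : 'cV[R]_d) (delta c : R) (w : T), 0 < c ->
    Ndelta A N delta t w = Ndelta A N delta (c *: t) w.
  move=> t delta c w c0; rewrite /Ndelta; apply: eq_count => i /=.
  by rewrite -scalemxAr !l1normZ gtr0_norm // mulrCA ltr_pM2l.
split; first by move=> t delta c w _ _ c0; exact: part1.
move=> _ [hae [h1 _]].
pose Phi e (t : 'cV[R]_d) := forall delta, 0 <= delta -> delta <= e ->
  ((1 + e)%:E < \int[P]_w ((Ndelta A N delta t w)%:R : R)%:E)%E.
have [e [e0 he]] : exists e, 0 < e /\ forall t, l1norm t = 1 -> Phi e t.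
  apply: compact_sphere => t t1.
  have tn0 : t != 0 by rewrite -l1norm_eq0 t1 oner_neq0.
  have hae' : {ae P, forall w, (1 <= Nt A N t w)%N}.
    case: hae => Z [mZ PZ sZ]; exists Z; split => // w /= hw; apply: sZ => /= hall.
    by apply: hw; apply: hall.
  have [rho [eta [rho0 [eta0 Hl]]]] := local hAmeas hNmeas hG t1 hae' (h1 t tn0).
  exists (Num.min rho eta); split; first by rewrite lt_min rho0 eta0.
  move=> t' e' ht' ep emin delta d0 de.
  move: emin ht'; rewrite !le_min => /andP[er ee] /andP[hr _].
  apply: le_lt_trans (Hl t' delta hr d0 (le_trans de er)).
  by rewrite lee_fin lerD2l.
exists e, e; split => //; split => // t delta tn0 d0 de.
pose c := l1norm t; pose u := c^-1 *: t.
have c0 : 0 < c by exact: l1norm_gt0.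
have u1 : l1norm u = 1 by rewrite /u l1normZ gtr0_norm ?invr_gt0 // mulVf // gt_eqF.
have tu : t = c *: u by rewrite /u scalerA divff ?scale1r // gt_eqF.
rewrite (_ : (fun w => ((Ndelta A N delta t w)%:R : R)%:E) =
             (fun w => ((Ndelta A N delta u w)%:R : R)%:E)).
  exact: he u u1 delta d0 de.
by apply/funext => w; rewrite tu -part1.
Qed.
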